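(* Let $b$ be a prime and $m,s\in\mathbb{N}$. Let $p$ be drawn uniformly from $\mathbb{P}_m$ and, independently, $\boldsymbol{g}=(g_1,\dots,g_s)$ uniformly from $\mathbb{G}_m^s$. For every $\boldsymbol{k}\in\mathbb{N}_0^s\setminus\{\boldsymbol{0}\}$, \[\Pr\left[\boldsymbol{k}\in P^\perp(p,\boldsymbol{g})\right]\le\frac{3\mu_1(\boldsymbol{k})}{b^m-1}.\] Moreover, if $k_j<b^m$ for all $j$, then \[\Pr\left[\boldsymbol{k}\in P^\perp(p,\boldsymbol{g})\right]\le\frac{1}{b^m-1}.\]
   Context: $\mathbb{F}_b$ is the field with $b$ elements. $\mathbb{P}_m$ is the set of monic irreducible polynomials in $\mathbb{F}_b[x]$ of degree $m$; $\mathbb{G}_m=\{g\in\mathbb{F}_b[x]\mid g\neq0,\ \deg(g)<m\}$. For $k\in\mathbb{N}_0$ with $b$-adic expansion $k=\kappa_0+\kappa_1b+\cdots$, set $k(x)=\kappa_0+\kappa_1x+\cdots\in\mathbb{F}_b[x]$. The dual net of the (infinite-precision) polynomial lattice point set with modulus $p$ and generating vector $\boldsymbol g$ is $P^\perp(p,\boldsymbol{g})=\{\boldsymbol{k}\in\mathbb{N}_0^s\mid \sum_{j=1}^sk_j(x)g_j(x)\equiv0\pmod{p(x)}\}$. NRT weight: for $k\in\mathbb{N}$, $\mu_1(k)$ is the number of $b$-adic digits of $k$ (i.e. $\mu_1(k)=c$ iff $b^{c-1}\le k<b^c$), $\mu_1(0)=0$, and $\mu_1(\boldsymbol{k})=\sum_{j=1}^s\mu_1(k_j)$.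 *)

(* Defs.v *)
From HB Require Import structures.
From mathcomp Require Import all_boot all_order all_algebra.
From mathcomp Require Import boolp.
Set Implicit Arguments. Unset Strict Implicit. Unset Printing Implicit Defensive.
Import Order.TTheory GRing.Theory Num.Theory.
Local Open Scope ring_scope.

Definition polyOfRow (b n : nat) (c : 'rV['F_b]_n) : {poly 'F_b} :=
  \sum_(i < n) c ord0 i *: 'X^i.

(* k(x) = kappa_0 + kappa_1 x + ... for the b-adic digits kappa_i of k
   (k has at most k+1 digits, so truncating at degree k is harmless). *)
Definition natpoly (b k : nat) : {poly 'F_b} :=
  \poly_(i < k.+1) (((k %/ b ^ i) %% b)%N%:R : 'F_b).

Definition Pm (b m : nat) : {set 'rV['F_b]_m.+1} :=
  [set c | (polyOfRow c \is monic) && (size (polyOfRow c) == m.+1)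
           && `[< irreducible_poly (polyOfRow c) >] ].

Definition Gm (b m : nat) : {set 'rV['F_b]_m} :=
  [set c | polyOfRow c != 0].

Definition in_dual (b s : nat) (p : {poly 'F_b}) (g : 'I_s -> {poly 'F_b})
  (k : 'I_s -> nat) : bool :=
  p %| \sum_(j < s) natpoly b (k j) * g j.

Definition dual_prob (b m s : nat) (k : 'I_s -> nat) : rat :=
  (#|[set pg : 'rV['F_b]_m.+1 * {ffun 'I_s -> 'rV['F_b]_m} |
      [&& pg.1 \in Pm b m, [forall j, pg.2 j \in Gm b m] &
          in_dual (polyOfRow pg.1) (fun j => polyOfRow (pg.2 j)) k] ]|)%:R
  / (#|Pm b m| * #|Gm b m| ^ s)%N%:R.

(* NRT weight: number of b-adic digits; mu1 k = c iff b^(c-1) <= k < b^c *)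
Definition mu1 (b k : nat) : nat := if k == 0%N then 0%N else (trunc_log b k).+1.

Definition mu1v (b s : nat) (k : 'I_s -> nat) : nat := \sum_(j < s) mu1 b (k j).

(* Main.v *)
Require Import Defs.
From mathcomp Require Import all_boot all_order all_algebra.
From mathcomp Require Import all_field.
From mathcomp Require Import boolp zify ring.
Import Order.TTheory GRing.Theory Num.Theory.
Local Open Scope ring_scope.

Lemma card_roots_lt (R : finIdomainType) (P : {poly R}) :
  P != 0 -> (#|[set x | root P x]| < size P)%N.
Proof.
move=> nzP; rewrite cardE; apply: max_poly_roots => //; last exact: enum_uniq.
by apply/allP=> x; rewrite mem_enum inE.
Qed.

Lemma polyOfRowE b n (c : 'rV['F_b]_n) : polyOfRow c = rVpoly c.
Proof.
apply/polyP => i; rewrite coef_rVpoly /polyOfRow coef_sum.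
case: insubP => [j ltin Dj | /negPn geni].
  subst i; rewrite (bigD1 j) //= coefZ coefXn eqxx mulr1 big1 ?addr0 // => l nlj.
  rewrite coefZ coefXn; case: eqP => [/val_inj E|_]; [by rewrite E eqxx in nlj | by rewrite mulr0].
rewrite big1 // => l _; rewrite coefZ coefXn.
case: eqP => [E|_]; [by rewrite E ltn_ord in geni | by rewrite mulr0].
Qed.

Lemma t2 (x y : nat) : (y >= x * x)%N -> (6 * x <= 2 * y + 7)%N.
Proof. case: (leqP 3 x) => h; first nia. case: x h => [|[|[|]]] //; lia. Qed.

Lemma half_le_of_dvd d m : (0 < m)%N -> (d %| m)%N -> d != m -> (d.*2 <= m)%N.
Proof.
move=> m0 /dvdnP[k Dm] nd; subst m.
case: k m0 nd => [|[|k]] m0 nd; first by rewrite mul0n in m0.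
  by rewrite mul1n eqxx in nd.
rewrite -mul2n leq_mul2r; apply/orP; right; lia.
Qed.

Lemma geom_sum b n : (1 < b)%N ->
  (\sum_(0 <= d < n.+1) (if (0 < d)%N then b ^ d else 0) + 2 <= 2 * b ^ n)%N.
Proof.
move=> b1; elim: n => [|n IH]; first by rewrite big_nat1.
rewrite big_nat_recr //= expnS.
have : (b ^ n <= b * b ^ n)%N by rewrite leq_pmull ?(ltnW b1).
have : (2 * b ^ n <= b * b ^ n)%N by rewrite leq_mul2r b1 orbT.
move=> h1 _; rewrite -addnA (addnC (b * _)) addnA.
apply: leq_trans (leq_add IH (leqnn _)) _.
set X := (b ^ n)%N in h1 *; set Y := (b * X)%N in h1 *; lia.
Qed.

Lemma sum_restrict b m :
  (\sum_(0 <= d < m.+1) (if (0 < d) && (d.*2 <= m) then b ^ d else 0) <=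
   \sum_(0 <= d < m./2.+1) (if (0 < d)%N then b ^ d else 0))%N.
Proof.
have hm : (m./2.+1 <= m.+1)%N by rewrite ltnS; lia.
rewrite (big_cat_nat (leq0n _) hm) /= [X in (_ + X <= _)%N]big1_seq ?addn0.
  apply: leq_sum => d _; case: (0 < d)%N => //=; case: ifP => //.
move=> d /andP[_]; rewrite mem_index_iota => /andP[h1 _].
case: ifP => // /andP[_ h2]; lia.
Qed.

Lemma final_bound b m S : (1 < b)%N ->
  (S <= \sum_(0 <= d < m.+1) (if (0 < d) && (d.*2 <= m) then b ^ d else 0))%N ->
  (3 * S <= 2 * b ^ m + 1)%N.
Proof.
move=> b1 hS; have := leq_trans hS (sum_restrict b m).
have := @geom_sum b m./2 b1.
have : (b ^ m./2 * b ^ m./2 <= b ^ m)%N.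
  by rewrite -expnD leq_pexp2l ?(ltnW b1) //; lia.
set x := (b ^ m./2)%N; set y := (b ^ m)%N.
set T := (\sum_(0 <= _ < _) _)%N.
move=> hxy hT hST.
have := @t2 x y hxy.
have : (0 < x)%N by rewrite expn_gt0 (ltnW b1).
lia.
Qed.

Section FieldPart.
Variables (b m : nat) (hb : prime b) (hm : (0 < m)%N).

Lemma card_Pm_lb : (b ^ m <= 3 * (#|Pm b m| * m) + 1)%N.
Proof.
have [F0 chF cardF] := pPrimePowerField hb hm.
pose L := pPrimeCharType chF.
have dimL : \dim {:L} = m by rewrite pprimeChar_dimf cardF pfactorK.
have cardL : #|L| = (b ^ m)%N by rewrite -cardF.
have hq : forall a : L, exists q, minPoly 1 a == map_poly (in_alg L) q.
  by move=> a; have /polyOver1P[q Dq] := minPolyOver 1 a; exists q; rewrite Dq.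
pose qf a := xchoose (hq a).
have Dq (a : L) : minPoly 1 a = map_poly (in_alg L) (qf a) by apply/eqP/(xchooseP (hq a)).
have szq (a : L) : size (qf a) = (adjoin_degree 1 a).+1.
  by rewrite -(size_map_poly (in_alg L)) -Dq size_minPoly.
have monq (a : L) : qf a \is monic by rewrite -(map_monic (in_alg L)) -Dq monic_minPoly.
have irrq (a : L) : irreducible_poly (qf a).
  split; first by rewrite szq ltnS.
  move=> r szr rdvd.
  have Or : map_poly (in_alg L) r \is a polyOver 1%VS by apply/polyOver1P; exists r.
  have := minPoly_irr (K := 1%AS) (x := a) Or.
  rewrite Dq eqp_map dvdp_map rdvd => /(_ isT) /orP[//|].
  rewrite -(rmorph1 (map_poly (in_alg L))) eqp_map => /eqp_size.
  by rewrite size_poly1 => /eqP; rewrite (negPf szr).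
have adegE (a : L) : adjoin_degree 1 a = \dim <<1%AS; a>>.
  by rewrite (dim_Fadjoin 1%AS) dimv1 muln1.
have adeg_le (a : L) : (adjoin_degree 1 a <= m)%N.
  rewrite adegE; exact: leq_trans (dimvS (subvf _)) (eq_leq dimL).
have adeg_dvd (a : L) : (adjoin_degree 1 a %| m)%N.
  rewrite adegE -dimL; exact: field_dimS (subvf _).
have adeg_gt0 (a : L) : (0 < adjoin_degree 1 a)%N by [].
have fermat (a : L) : a ^+ (b ^ adjoin_degree 1 a) = a.
  have := Fermat's_little_theorem (<<1%AS; a>>)%AS a.
  by rewrite memv_adjoin card_Fp // -adegE => /esym/eqP.
pose A := [set a : L | adjoin_degree 1 a == m].
have cA : (#|A| <= #|Pm b m| * m)%N.
  rewrite -sum1_card (partition_big (fun a => poly_rV (qf a) : 'rV['F_b]_m.+1) (mem (Pm b m))).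
    rewrite -sum_nat_const; apply: leq_sum => c Pc.
    rewrite sum1dep_card.
    have Pc' : c \in Pm b m by []. rewrite /Pm inE polyOfRowE in Pc'.
    case/andP: Pc' => /andP[_ /eqP szc] _.
    set P := map_poly (in_alg L) (rVpoly c).
    have szP : size P = m.+1 by rewrite size_map_poly.
    have nzP : P != 0 by rewrite -size_poly_eq0 szP.
    have := @card_roots_lt _ P nzP; rewrite szP ltnS; apply: leq_trans.
    apply: subset_leq_card; apply/subsetP => a; rewrite !inE => /andP[/eqP Aa /eqP ca].
    rewrite /P -ca poly_rV_K ?szq ?Aa // -Dq; exact: root_minPoly.
  move=> a; rewrite inE => /eqP Aa.
  have szqa : size (qf a) = m.+1 by rewrite szq Aa.
  change (poly_rV (qf a) \in Pm b m).
  rewrite /Pm inE polyOfRowE poly_rV_K ?szqa // monq eqxx /=.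
  by apply/asboolP.
have cC : (#|~: A| <= \sum_(0 <= d < m.+1) (if (0 < d) && (d.*2 <= m) then b ^ d else 0))%N.
  rewrite big_mkord.
  rewrite -sum1_card (partition_big (fun a => inord (adjoin_degree 1 a) : 'I_m.+1) xpredT) //.
  apply: leq_sum => d _.
  rewrite sum1dep_card.
  have key (a : L) : adjoin_degree 1 a != m -> inord (adjoin_degree 1 a) == d ->
      [/\ adjoin_degree 1 a = d, (0 < d)%N & (d.*2 <= m)%N].
    move=> nA /eqP ad.
    have e : adjoin_degree 1 a = d by rewrite -ad inordK // ltnS adeg_le.
    rewrite -e; split => //; apply: half_le_of_dvd => //.
  case: ifP => cond.
    case/andP: cond => d0 _.
    pose P : {poly L} := 'X^(b ^ d) - 'X.
    have bd1 : (1 < b ^ d)%N.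
      by have := ltn_exp2l 0 d (prime_gt1 hb); rewrite expn0 => ->.
    have szP : size P = (b ^ d).+1.
      by rewrite size_polyDl ?size_polyXn // size_polyN size_polyX ltnS.
    have nzP : P != 0 by rewrite -size_poly_eq0 szP.
    have := @card_roots_lt _ P nzP; rewrite szP ltnS; apply: leq_trans.
    apply: subset_leq_card; apply/subsetP => a; rewrite !inE => /andP[nA ad].
    have [e _ _] := key a nA ad.
    by rewrite /root /P !hornerE -e fermat subrr.
  rewrite leqn0 cards_eq0; apply/eqP/setP => a; rewrite !inE.
  apply/negbTE/negP => /andP[nA ad].
  have [_ d0 d2] := key a nA ad.
  by rewrite d0 d2 in cond.
have : (#|L| = #|A| + #|~: A|)%N by rewrite cardsC.
rewrite cardL.
have := @final_bound b m _ (prime_gt1 hb) cC.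
lia.
Qed.
End FieldPart.

Set Implicit Arguments. Unset Strict Implicit. Unset Printing Implicit Defensive.

Lemma rat_frac_le (N D X G : nat) : (0 < G)%N -> (N * G <= X * D)%N ->
  (N%:R / D%:R <= X%:R / G%:R :> rat).
Proof.
move=> G0 h; case: D h => [|D] h.
  by rewrite invr0 mulr0 divr_ge0 ?ler0n.
rewrite ler_pdivrMr ?ltr0n // mulrAC ler_pdivlMr ?ltr0n // -!natrM ler_nat.
by [].
Qed.

Section Nat.
Variables (b : nat) (hb : prime b).

Lemma coef_natpoly k i :
  (natpoly b k)`_i = if (i < k.+1)%N then (((k %/ b ^ i) %% b)%N%:R : 'F_b) else 0.
Proof. by rewrite coef_poly. Qed.

Lemma natpoly_neq0 k : k != 0%N -> natpoly b k != 0.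
Proof.
move=> k0; have b1 := prime_gt1 hb.
have k0' : (0 < k)%N by rewrite lt0n.
set t := trunc_log b k.
have h1 := trunc_logP b1 k0'; have h2 := trunc_log_ltn k b1.
apply/eqP => /(congr1 (fun p : {poly 'F_b} => p`_t)).
rewrite coef_natpoly coef0.
have -> : (t < k.+1)%N.
  by rewrite ltnS (leq_trans (ltnW (ltn_expl t b1))).
have bt0 : (0 < b ^ t)%N by rewrite expn_gt0 (ltnW b1).
rewrite modn_small; last by rewrite ltn_divLR // -expnS.
move=> E; have := val_Fp_nat hb (k %/ b ^ t); rewrite E /= modn_small; last by rewrite ltn_divLR // -expnS.
move=> E0; have := divn_gt0 k bt0; rewrite -E0 ltnn h1 //.
Qed.

Lemma size_natpoly k : (size (natpoly b k) <= mu1 b k)%N.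
Proof.
have b1 := prime_gt1 hb.
rewrite /mu1; case: eqP => [->|/eqP k0].
  rewrite leqn0 size_poly_eq0; apply/eqP/polyP => i.
  by rewrite coef_natpoly coef0 div0n mod0n; case: ifP.
apply/leq_sizeP => j hj; rewrite coef_natpoly.
have k0' : (0 < k)%N by rewrite lt0n.
have h2 := trunc_log_ltn k b1.
rewrite divn_small ?mod0n; first by case: ifP.
by apply: leq_trans h2 _; rewrite leq_pexp2l // (ltnW b1).
Qed.

Lemma mu1_lt k m : (k < b ^ m)%N -> (mu1 b k <= m)%N.
Proof.
have b1 := prime_gt1 hb.
rewrite /mu1; case: eqP => // /eqP k0 hk.
have k0' : (0 < k)%N by rewrite lt0n.
have := leq_ltn_trans (trunc_logP b1 k0') hk.
by rewrite ltn_exp2l.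
Qed.

End Nat.

Section Main.
Variables (b m s : nat) (hb : prime b) (hm : (0 < m)%N) (k : 'I_s -> nat).

Local Notation F := ('F_b).
Local Notation rowm := ('rV[F]_m).
Local Notation G := #|Gm b m|.

Lemma rVpoly_eq0 n (c : 'rV[F]_n) : (rVpoly c == 0) = (c == 0).
Proof.
apply/eqP/eqP => [h|->]; last exact: linear0.
by rewrite -[c]rVpolyK h linear0.
Qed.

Lemma card_Gm : G = (b ^ m - 1)%N.
Proof.
have -> : G = #|predC1 (0 : rowm)|.
  apply: eq_card => c; rewrite /Gm inE polyOfRowE rVpoly_eq0 //.
rewrite cardC1 card_mx card_Fp // mul1n subn1 //.
Qed.

Definition Dset (p : {poly F}) :=
  [set g : {ffun 'I_s -> rowm} | [forall j, g j \in Gm b m] &&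
     in_dual p (fun j => polyOfRow (g j)) k].

Definition Tset := [set g : {ffun 'I_s -> rowm} | [forall j, g j \in Gm b m]].

Lemma card_Tset : #|Tset| = (G ^ s)%N.
Proof.
rewrite -[s in RHS]card_ord -card_ffun_on; apply: eq_card => g.
rewrite inE; apply/forallP/familyP => h j; exact: h.
Qed.

Lemma Dset_le p : (#|Dset p| <= G ^ s)%N.
Proof.
rewrite -card_Tset; apply: subset_leq_card; apply/subsetP => g.
by rewrite !inE => /andP[].
Qed.

Lemma Dset_bad (p : {poly F}) j0 : size p = m.+1 -> irreducible_poly p ->
  ~~ (p %| natpoly b (k j0)) -> (#|Dset p| * G <= G ^ s)%N.
Proof.
move=> szp irrp ndv.
pose phi (x : {ffun 'I_s -> rowm} * rowm) : {ffun 'I_s -> rowm} :=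
  [ffun j => if j == j0 then x.2 else x.1 j].
have inj : {in setX (Dset p) (Gm b m) &, injective phi}.
  move=> [g v] [g' v'] /setXP[Dg Gv] /setXP[Dg' Gv'] /= E.
  have ev j : phi (g, v) j = phi (g', v') j by rewrite E.
  have vv : v = v' by have := ev j0; rewrite !ffunE eqxx.
  have gj j : j != j0 -> g j = g' j.
    by move=> nj; have := ev j; rewrite !ffunE /= (negPf nj).
  have gj0 : g j0 = g' j0.
    move: Dg Dg'; rewrite !inE => /andP[_ d1] /andP[_ d2].
    rewrite /in_dual in d1 d2.
    rewrite (bigD1 j0) //= in d1; rewrite (bigD1 j0) //= in d2.
    have eqr : \sum_(j < s | j != j0) natpoly b (k j) * polyOfRow (g j) =
               \sum_(j < s | j != j0) natpoly b (k j) * polyOfRow (g' j).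
      by apply: eq_bigr => j nj; rewrite gj.
    rewrite eqr in d1.
    have := dvdp_sub d1 d2.
    set R := \sum_(j < s | j != j0) _.
    have -> : natpoly b (k j0) * polyOfRow (g j0) + R -
              (natpoly b (k j0) * polyOfRow (g' j0) + R) =
              natpoly b (k j0) * (polyOfRow (g j0) - polyOfRow (g' j0)) by ring.
    rewrite Gauss_dvdpr; last by rewrite irreducible_poly_coprime.
    rewrite !polyOfRowE -linearB => hd.
    apply/eqP; rewrite -subr_eq0 -rVpoly_eq0; apply: contraLR hd => nz.
    apply/negP => /(dvdp_leq nz); rewrite szp => h.
    by have := leq_trans h (size_poly _ _); rewrite ltnn.
  have eg : g = g'.
    by apply/ffunP => j; case: (eqVneq j j0) => [->|nj]; [exact: gj0 | exact: gj].
  by rewrite eg vv.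
have sub : phi @: setX (Dset p) (Gm b m) \subset Tset.
  apply/subsetP => h /imsetP[[g v] /setXP[Dg Gv] ->]; rewrite inE.
  apply/forallP => j; rewrite ffunE; case: ifP => _ //=.
  by move: Dg; rewrite inE => /andP[/forallP].
rewrite -card_Tset -cardsX -(card_in_imset inj); exact: subset_leq_card sub.
Qed.

Lemma N_eq :
  #|[set pg : 'rV[F]_m.+1 * {ffun 'I_s -> rowm} |
      [&& pg.1 \in Pm b m, [forall j, pg.2 j \in Gm b m] &
          in_dual (polyOfRow pg.1) (fun j => polyOfRow (pg.2 j)) k] ]| =
  (\sum_(c in Pm b m) #|Dset (polyOfRow c)|)%N.
Proof.
rewrite -sum1dep_card big_mkcond.
set P := (fun pg : 'rV[F]_m.+1 * {ffun 'I_s -> rowm} => [&& pg.1 \in Pm b m, [forall j, pg.2 j \in Gm b m] &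
          in_dual (polyOfRow pg.1) (fun j => polyOfRow (pg.2 j)) k]).
have -> : (\sum_pg (if P pg then 1 else 0) =
     \sum_(c : 'rV[F]_m.+1) \sum_(g : {ffun 'I_s -> rowm}) (if P (c, g) then 1 else 0))%N.
  by rewrite pair_bigA; apply: eq_bigr => [[]].
rewrite [in RHS]big_mkcond; apply: eq_bigr => c _.
rewrite /P /=; case: (c \in Pm b m) => /=; last by rewrite big1.
by rewrite /Dset -sum1dep_card [RHS]big_mkcond.
Qed.

Lemma Pm_facts (c : 'rV[F]_m.+1) : c \in Pm b m ->
  [/\ polyOfRow c \is monic, size (polyOfRow c) = m.+1 & irreducible_poly (polyOfRow c)].
Proof.
by rewrite /Pm inE => /andP[/andP[mo /eqP sz] /asboolP ir].
Qed.

Lemma good_count (f : {poly F}) : f != 0 ->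
  (#|[set c in Pm b m | (polyOfRow c %| f)%R]| * m < size f)%N.
Proof.
move: f; suff H : forall n (f : {poly F}), (size f <= n)%N -> f != 0 ->
  (#|[set c in Pm b m | (polyOfRow c %| f)%R]| * m < size f)%N.
  by move=> f; exact: H.
elim=> [|n IH] f szf nzf.
  by rewrite leqn0 size_poly_eq0 (negPf nzf) in szf.
set S := [set c in Pm b m | (polyOfRow c %| f)%R].
have [->|[c0 Sc0]] := set_0Vmem S; first by rewrite cards0 mul0n size_poly_gt0.
have := Sc0; rewrite inE => /andP[Pc0 dvd0].
have [mo0 sz0 irr0] := Pm_facts Pc0.
set p0 := polyOfRow c0 in mo0 sz0 irr0 dvd0.
have nzp0 : p0 != 0 by rewrite -size_poly_eq0 sz0.
set f' := f %/ p0.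
have Df : f = f' * p0 by rewrite divpK.
have nzf' : f' != 0 by apply: contraNneq nzf => e; rewrite Df e mul0r.
have szf' : size f = (size f' + m)%N.
  by rewrite Df size_mul // sz0 addnS.
have sub : S :\ c0 \subset [set c in Pm b m | (polyOfRow c %| f')%R].
  apply/subsetP => c; rewrite !inE => /andP[nc /andP[Pc dvc]].
  have Pc2 : c \in Pm b m by rewrite /Pm inE.
  rewrite Pc /=.
  have [mo sz irr] := Pm_facts Pc2.
  have cop : coprimep (polyOfRow c) p0.
    rewrite irreducible_poly_coprime //; apply/negP => hd.
    have nz1 : size (polyOfRow c) != 1%N by rewrite sz eqSS -lt0n.
    have := irr0 _ nz1 hd; rewrite eqp_monic // => /eqP e.
    have e2 : c = c0 by apply: (can_inj (@rVpolyK _ m.+1)); rewrite -!polyOfRowE.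
    by rewrite e2 eqxx in nc.
  by rewrite Df Gauss_dvdpl in dvc.
have szn : (size f' <= n)%N by move: szf; rewrite szf'; lia.
have h1 := IH f' szn nzf'.
have h2 := leq_mul (subset_leq_card sub) (leqnn m).
have h3 := cardsD1 c0 S; rewrite Sc0 in h3.
rewrite h3 szf' mulnDl mul1n.
by rewrite addnC ltn_add2r (leq_ltn_trans h2 h1).
Qed.

End Main.

Unset Implicit Arguments.


Theorem lemma2p19 (b m s : nat) (hb : prime b) (hm : (0 < m)%N) (hs : (0 < s)%N)
  (k : 'I_s -> nat) (hk : exists j, k j != 0%N) :
  dual_prob b m k <= (3 * mu1v b k)%N%:R / (b ^ m - 1)%N%:R /\
  ((forall j, (k j < b ^ m)%N) -> dual_prob b m k <= 1 / (b ^ m - 1)%N%:R).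
Proof.
have b1 := prime_gt1 hb.
have eG := card_Gm m hb.
set G := #|Gm b m| in eG *.
have G0 : (0 < G)%N.
  rewrite eG subn_gt0 (leq_trans b1) //.
  by rewrite -[X in (X <= _)%N]expn1 leq_pexp2l // ltnW.
have [j1 kj1] := hk.
set f := natpoly b (k j1).
have nzf : f != 0 := natpoly_neq0 hb kj1.
set Good := [set c in Pm b m | [forall j, (polyOfRow c %| natpoly b (k j))%R]].
set P := #|Pm b m|.
set Y := (G ^ s)%N.
set N := #|[set pg : 'rV['F_b]_m.+1 * {ffun 'I_s -> 'rV['F_b]_m} |
      [&& pg.1 \in Pm b m, [forall j, pg.2 j \in Gm b m] &
          in_dual (polyOfRow pg.1) (fun j => polyOfRow (pg.2 j)) k] ]|.
have key : (N * G <= #|Good| * (Y * G) + P * Y)%N.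
  rewrite /N N_eq big_distrl /= (bigID (fun c => c \in Good)) /=.
  apply: leq_add.
    apply: (@leq_trans (\sum_(c in Pm b m | c \in Good) (Y * G))%N).
      apply: leq_sum => c _; rewrite leq_mul2r Dset_le ?orbT //.
    rewrite sum_nat_const leq_mul2r; apply/orP; right.
    by apply: subset_leq_card; apply/subsetP => c /andP[].
  apply: (@leq_trans (\sum_(c in Pm b m | c \notin Good) Y)%N).
    apply: leq_sum => c /andP[Pc nG].
    have [mo sz irr] := Pm_facts Pc.
    have : ~~ [forall j, (polyOfRow c %| natpoly b (k j))%R].
      by move: nG; rewrite inE Pc.
    case/forallPn => j0 hj0.
    exact: Dset_bad sz irr hj0.
  rewrite sum_nat_const leq_mul2r; apply/orP; right.
  by apply: subset_leq_card; apply/subsetP => c /andP[].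
rewrite /dual_prob -/N -/P -/G -/Y.
split; last first.
  move=> hkb.
  have G0' : #|Good| = 0%N.
    apply/eqP; rewrite cards_eq0; apply/eqP/setP => c; rewrite in_set0.
    apply/negbTE/negP; rewrite in_set => /andP[Pc /forallP /(_ j1) hd].
    have [_ sz _] := Pm_facts Pc.
    have := dvdp_leq nzf hd; rewrite sz.
    have := leq_trans (size_natpoly hb (k j1)) (mu1_lt hb (hkb j1)).
    rewrite -/f => h1 h2; by have := leq_ltn_trans h1 h2; rewrite ltnn.
  rewrite -eG; apply: (@rat_frac_le N (P * Y) 1 G) => //.
  by rewrite mul1n; move: key; rewrite G0' mul0n add0n.
rewrite -eG; apply: rat_frac_le => //.
have cG : (#|Good| * m < size f)%N.
  apply: (leq_ltn_trans _ (good_count hb hm nzf)).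
  rewrite leq_mul2r; apply/orP; right; apply: subset_leq_card.
  apply/subsetP => c; rewrite !inE => /andP[-> /forallP /(_ j1)] //.
have hmu : (size f <= mu1v b k)%N.
  apply: leq_trans (size_natpoly hb (k j1)) _.
  by rewrite /mu1v (bigD1 j1) //= leq_addr.
have hG : (G <= 3 * (P * m))%N.
  have := @card_Pm_lb b m hb hm; rewrite -/P eG; lia.
set g := #|Good| in key cG.
set mu := mu1v b k in hmu *.
apply: (leq_trans key).
have e1 : (g * (Y * G) <= g * (Y * (3 * (P * m))))%N by rewrite !leq_mul2l hG !orbT.
have e2 : (g * (Y * (3 * (P * m))) = 3 * (P * Y) * (g * m))%N by ring.
have e3 : (3 * (P * Y) * (g * m) + P * Y <= 3 * mu * (P * Y))%N.
  have : (g * m + 1 <= mu)%N by lia.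
  move=> h; have := leq_mul (leqnn (3 * (P * Y))) h.
  rewrite mulnDr muln1 => h'.
  have e4 : (3 * (P * Y) * mu = 3 * mu * (P * Y))%N by ring.
  rewrite -e4; apply: leq_trans h'; rewrite leq_add2l.
  by rewrite leq_pmull.
lia.
Qed.
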